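(* Let $\triangle PQR$ be a (closed, filled) triangle in $D$ and write $\psi=\psi_{\triangle PQR}$. The following are equivalent: (1) there exists $\alpha\in S^1$ with $\psi^5(\alpha)=\alpha$; (2) $\rho(\psi)=\frac{2}{5}$; (3) there exist five points $\alpha_0<\alpha_1<\alpha_2<\alpha_3<\alpha_4$ in $[0,1)$ such that $\psi(\pi(\alpha_i))=\pi(\alpha_j)$ whenever $j\equiv i+2 \pmod 5$; (4) there exists $\alpha\in S^1$ such that $\overline{\psi}^5(x)=x+2$ for $x\in\pi^{-1}(\alpha)$, where $\overline\psi$ is the lift of $\psi$ with $\overline\psi(0)\in[0,1)$.
   Context: $D$ is the open unit disk in $\mathbb R^2$, $S^1$ its boundary circle identified with $\mathbb R/\mathbb Z$ via the counterclockwise normalized angle, and $\pi:\mathbb R\to S^1$, $\pi(x)=x-\lfloor x\rfloor$. For a closed convex $U\subset D$ and $v\in S^1$, $\psi_U(v)$ is the point $w\in S^1\setminus\{v\}$ such that the line $vw$ meets $U$ and $U$ lies in the closed half-plane to the left of the directed line from $v$ to $w$; it is an orientation-preserving homeomorphism of $S^1$. For such $f$, $\rho(f)=\lim_{n\to\infty}(\overline f^n(x)-x)/n$ with $\overline f$ the lift to $\mathbb R$ satisfying $\overline f(0)\in[0,1)$. *)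

(* Defs.v *)
From Stdlib Require Import Reals Lra ClassicalEpsilon.
From Coquelicot Require Import Coquelicot.
Open Scope R_scope.

Definition pt := (R * R)%type.

Definition inD (p : pt) : Prop := fst p ^ 2 + snd p ^ 2 < 1.

(* pi : R -> S^1 = [0,1), pi x = x - floor x.  S^1 is represented by [0,1). *)
Definition piS (x : R) : R := x - IZR (Int_part x).

Definition cpt (t : R) : pt := (cos (2 * PI * t), sin (2 * PI * t)).

(* cross product (b - a) x (c - a): positive iff c is strictly left of the
   directed line a -> b. *)
Definition cross (a b c : pt) : R :=
  (fst b - fst a) * (snd c - snd a) - (snd b - snd a) * (fst c - fst a).

Definition in_triangle (P Q R0 : pt) (x : pt) : Prop :=
  exists a b c : R, 0 <= a /\ 0 <= b /\ 0 <= c /\ a + b + c = 1 /\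
    fst x = a * fst P + b * fst Q + c * fst R0 /\
    snd x = a * snd P + b * snd Q + c * snd R0.

Definition triangle_in_D (P Q R0 : pt) : Prop :=
  inD P /\ inD Q /\ inD R0 /\ cross P Q R0 <> 0.

Definition is_psi (U : pt -> Prop) (v w : R) : Prop :=
  0 <= w < 1 /\ cpt w <> cpt v /\
  (exists x, U x /\ cross (cpt v) (cpt w) x = 0) /\
  (forall x, U x -> 0 <= cross (cpt v) (cpt w) x).

(* psi_U as a function S^1 -> S^1 (the defining point is unique for the
   convex sets considered; it is selected by choice). *)
Definition psi (U : pt -> Prop) (v : R) : R :=
  epsilon (inhabits 0) (fun w => is_psi U (piS v) w).

Definition is_lift (f : R -> R) (F : R -> R) : Prop :=
  (forall x, continuous F x) /\
  (forall x, piS (F x) = f (piS x)) /\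
  0 <= F 0 < 1.

Definition rot_number (F : R -> R) : Rbar :=
  Lim_seq (fun n => (Nat.iter n F 0 - 0) / INR n).

(* Main.v *)
Require Import Defs.
From Stdlib Require Import Reals Lra Lia ZArith ClassicalEpsilon.
From Coquelicot Require Import Coquelicot.
Open Scope R_scope.

Lemma piS_range x : 0 <= piS x < 1.
Proof. unfold piS. destruct (base_Int_part x). lra. Qed.

Lemma piS_char x y k : 0 <= y < 1 -> x - y = IZR k -> piS x = y.
Proof.
  intros Hy Hk. unfold piS. destruct (base_Int_part x) as [H1 H2].
  assert (Int_part x = k).
  { assert (IZR (Int_part x) < IZR k + 1) by lra.
    assert (IZR k < IZR (Int_part x) + 1) by lra.
    rewrite <- plus_IZR in *. apply lt_IZR in H. apply lt_IZR in H0. lia. }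
  subst. lra.
Qed.

Lemma piS_int x k : piS (x + IZR k) = piS x.
Proof.
  apply piS_char with (k := (k + Int_part x)%Z). apply piS_range.
  unfold piS. rewrite plus_IZR. ring.
Qed.

Lemma piS_id y : 0 <= y < 1 -> piS y = y.
Proof. intros H. apply piS_char with (k := 0%Z); auto. simpl; ring. Qed.

Lemma piS_diff x y : piS x = piS y -> exists k, x - y = IZR k.
Proof.
  unfold piS; intros H. exists (Int_part x - Int_part y)%Z. rewrite minus_IZR. lra.
Qed.

Lemma x_minus_piS x : exists k, x - piS x = IZR k.
Proof. exists (Int_part x). unfold piS. ring. Qed.

Lemma cos_int y k : cos (y + 2 * PI * IZR k) = cos y.
Proof.
  destruct (Z_le_gt_dec 0 k) as [Hk|Hk].
  - rewrite <- (Z2Nat.id k Hk). rewrite <- INR_IZR_INZ.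
    replace (y + 2 * PI * INR (Z.to_nat k)) with (y + 2 * INR (Z.to_nat k) * PI) by ring.
    apply cos_period.
  - replace k with (- Z.of_nat (Z.to_nat (- k)))%Z by lia.
    rewrite opp_IZR, <- INR_IZR_INZ.
    set (n := Z.to_nat (-k)).
    rewrite <- (cos_period (y + 2 * PI * - INR n) n). f_equal. ring.
Qed.

Lemma sin_int y k : sin (y + 2 * PI * IZR k) = sin y.
Proof.
  destruct (Z_le_gt_dec 0 k) as [Hk|Hk].
  - rewrite <- (Z2Nat.id k Hk). rewrite <- INR_IZR_INZ.
    replace (y + 2 * PI * INR (Z.to_nat k)) with (y + 2 * INR (Z.to_nat k) * PI) by ring.
    apply sin_period.
  - replace k with (- Z.of_nat (Z.to_nat (- k)))%Z by lia.
    rewrite opp_IZR, <- INR_IZR_INZ.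
    set (n := Z.to_nat (-k)).
    rewrite <- (sin_period (y + 2 * PI * - INR n) n). f_equal. ring.
Qed.

Lemma cpt_int x k : cpt (x + IZR k) = cpt x.
Proof.
  unfold cpt. replace (2 * PI * (x + IZR k)) with (2 * PI * x + 2 * PI * IZR k) by ring.
  rewrite cos_int, sin_int. reflexivity.
Qed.

Lemma cpt_diff x y k : x - y = IZR k -> cpt x = cpt y.
Proof. intros H. replace x with (y + IZR k) by lra. apply cpt_int. Qed.

Lemma cpt_piS x : cpt (piS x) = cpt x.
Proof. destruct (x_minus_piS x) as [k Hk]. symmetry. apply (cpt_diff _ _ k Hk). Qed.

Lemma cpt_1 x : cpt (x + 1) = cpt x.
Proof. apply (cpt_int x 1). Qed.

Lemma cross_formula s t X :
  cross (cpt s) (cpt t) X =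
  2 * sin (PI * t - PI * s) * (cos (PI * t - PI * s) -
     (fst X * cos (PI * s + PI * t) + snd X * sin (PI * s + PI * t))).
Proof.
  unfold cross, cpt; simpl.
  set (A := PI * s). set (B := PI * t).
  replace (2 * PI * s) with (2 * A) by (unfold A; ring).
  replace (2 * PI * t) with (2 * B) by (unfold B; ring).
  assert (E1 : cos (2 * B) - cos (2 * A) = -2 * sin (B - A) * sin (A + B)).
  { rewrite form2. f_equal; [f_equal; f_equal; field | f_equal; field]. }
  assert (E2 : sin (2 * B) - sin (2 * A) = 2 * cos (A + B) * sin (B - A)).
  { rewrite form4. f_equal; [f_equal; f_equal; field | f_equal; field]. }
  assert (E3 : cos (B - A) = cos (A + B) * cos (2 * A) + sin (A + B) * sin (2 * A)).
  { replace (B - A) with ((A + B) - 2 * A) by ring. apply cos_minus. }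
  rewrite E1, E2, E3. ring.
Qed.


Lemma cR_plus (f g : R -> R) x : continuous f x -> continuous g x -> continuous (fun y => f y + g y) x.
Proof. intros; apply (continuous_plus f g); auto. Qed.
Lemma cR_minus (f g : R -> R) x : continuous f x -> continuous g x -> continuous (fun y => f y - g y) x.
Proof. intros; apply (continuous_minus f g); auto. Qed.
Lemma cR_mult (f g : R -> R) x : continuous f x -> continuous g x -> continuous (fun y => f y * g y) x.
Proof. intros; apply (continuous_mult f g); auto. Qed.
Lemma cR_const (c : R) x : continuous (fun _ : R => c) x.
Proof. apply continuous_const. Qed.
Lemma cR_id x : continuous (fun y : R => y) x.
Proof. apply continuous_id. Qed.
Lemma cR_cos (f : R -> R) x : continuous f x -> continuous (fun y => cos (f y)) x.
Proof. intros; apply continuous_cos_comp; auto. Qed.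
Lemma cR_sin (f : R -> R) x : continuous f x -> continuous (fun y => sin (f y)) x.
Proof. intros; apply continuous_sin_comp; auto. Qed.
Lemma cR_abs (f : R -> R) x : continuous f x -> continuous (fun y => Rabs (f y)) x.
Proof. intros; apply continuous_Rabs_comp; auto. Qed.

Definition m2 (a b : R) := (a + b - Rabs (a - b)) / 2.
Lemma m2_spec a b : m2 a b <= a /\ m2 a b <= b /\ (m2 a b = a \/ m2 a b = b).
Proof. unfold m2. destruct (Rle_dec a b). - rewrite Rabs_left1 by lra. lra.
 - rewrite Rabs_right by lra. lra. Qed.
Lemma cR_m2 (f g : R -> R) x : continuous f x -> continuous g x -> continuous (fun y => m2 (f y) (g y)) x.
Proof. intros. unfold m2. apply cR_mult; [|apply cR_const].
  apply cR_minus; [apply cR_plus; auto| apply cR_abs, cR_minus; auto]. Qed.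

Lemma cross_cont s X x : continuous (fun t => cross (cpt s) (cpt t) X) x.
Proof.
  unfold cross, cpt; simpl.
  apply cR_minus; apply cR_mult; try apply cR_const;
  apply cR_minus; try apply cR_const.
  - apply cR_cos. apply cR_mult; [apply cR_const|apply cR_id].
  - apply cR_sin. apply cR_mult; [apply cR_const|apply cR_id].
Qed.

Lemma cpt_norm t : fst (cpt t) ^ 2 + snd (cpt t) ^ 2 = 1.
Proof. unfold cpt; simpl. pose proof (sin2_cos2 (2*PI*t)). unfold Rsqr in H. nra. Qed.

Lemma sinpi_pos x : 0 < x < 1 -> 0 < sin (PI * x).
Proof. intros. pose proof PI_RGT_0. apply sin_gt_0; nra. Qed.
Lemma sinpi_neg x : -1 < x < 0 -> sin (PI * x) < 0.
Proof. intros. pose proof PI_RGT_0. apply sin_lt_0_var; nra. Qed.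

Lemma cross3 s t r : cross (cpt s) (cpt t) (cpt r) =
  4 * sin (PI * (t - s)) * sin (PI * (r - t)) * sin (PI * (r - s)).
Proof.
  rewrite cross_formula. unfold cpt at 1 2; simpl.
  set (A := PI * s). set (B := PI * t). set (C := PI * r).
  replace (2 * PI * r) with (2 * C) by (unfold C; ring).
  assert (E : cos (2 * C) * cos (A + B) + sin (2 * C) * sin (A + B) = cos (2*C - (A+B))).
  { rewrite cos_minus. ring. }
  replace (PI * (t - s)) with (B - A) by (unfold A, B; ring).
  replace (PI * (r - t)) with (C - B) by (unfold B, C; ring).
  replace (PI * (r - s)) with (C - A) by (unfold A, C; ring).
  rewrite E. rewrite form2.
  replace ((B - A - (2 * C - (A + B))) / 2) with (- (C - B)) by field.
  replace ((B - A + (2 * C - (A + B))) / 2) with (C - A) by field.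
  rewrite sin_neg. ring.
Qed.

Lemma arc_neg s t r : s < t < s + 1 -> s < r < t -> cross (cpt s) (cpt t) (cpt r) < 0.
Proof.
  intros. rewrite cross3.
  pose proof (sinpi_pos (t - s)). pose proof (sinpi_neg (r - t)). pose proof (sinpi_pos (r - s)).
  assert (0 < sin (PI * (t - s))) by (apply H1; lra).
  assert (sin (PI * (r - t)) < 0) by (apply H2; lra).
  assert (0 < sin (PI * (r - s))) by (apply H3; lra).
  assert (0 < sin (PI * (t - s)) * sin (PI * (r - s))) by nra. nra.
Qed.

Lemma arc_pos s t r : s < t < s + 1 -> t < r < s + 1 -> 0 < cross (cpt s) (cpt t) (cpt r).
Proof.
  intros. rewrite cross3.
  pose proof (sinpi_pos (t - s)). pose proof (sinpi_pos (r - t)). pose proof (sinpi_pos (r - s)).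
  assert (0 < sin (PI * (t - s))) by (apply H1; lra).
  assert (0 < sin (PI * (r - t))) by (apply H2; lra).
  assert (0 < sin (PI * (r - s))) by (apply H3; lra).
  assert (0 < sin (PI * (t - s)) * sin (PI * (r - s))) by nra. nra.
Qed.

Lemma cross_aab a b : cross a b b = 0.
Proof. unfold cross; ring. Qed.
Lemma cross_aba a b : cross a b a = 0.
Proof. unfold cross; ring. Qed.
Lemma cross_swap a b x : cross b a x = - cross a b x.
Proof. unfold cross; ring. Qed.

Lemma arc_nonneg s t r : s < t < s + 1 -> t <= r <= s + 1 -> 0 <= cross (cpt s) (cpt t) (cpt r).
Proof.
  intros. destruct (Req_dec r t). subst; rewrite cross_aab; lra.
  destruct (Req_dec r (s+1)). subst; rewrite cpt_1, cross_aba; lra.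
  left; apply arc_pos; lra.
Qed.

Lemma chord_lemma a b X :
  fst a ^ 2 + snd a ^ 2 = 1 -> fst b ^ 2 + snd b ^ 2 = 1 -> a <> b ->
  fst X ^ 2 + snd X ^ 2 < 1 -> cross a b X = 0 ->
  exists l, 0 < l < 1 /\ fst X = fst a + l * (fst b - fst a) /\ snd X = snd a + l * (snd b - snd a).
Proof.
  destruct a as [a1 a2], b as [b1 b2], X as [x1 x2]; unfold cross; cbn [fst snd]. intros Ha Hb Hab HX Hc.
  set (d1 := b1 - a1). set (d2 := b2 - a2).
  assert (Hd : 0 < d1 * d1 + d2 * d2).
  { destruct (Req_dec d1 0); destruct (Req_dec d2 0).
    - exfalso; apply Hab; f_equal; unfold d1, d2 in *; lra.
    - nra. - nra. - nra. }
  set (l := ((x1 - a1) * d1 + (x2 - a2) * d2) / (d1 * d1 + d2 * d2)).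
  assert (K1 : (x1 - a1) * (d1*d1+d2*d2) - ((x1 - a1) * d1 + (x2 - a2) * d2) * d1 = - d2 * ((b1 - a1) * (x2 - a2) - (b2 - a2) * (x1 - a1))) by (unfold d1,d2; ring).
  assert (K2 : (x2 - a2) * (d1*d1+d2*d2) - ((x1 - a1) * d1 + (x2 - a2) * d2) * d2 = d1 * ((b1 - a1) * (x2 - a2) - (b2 - a2) * (x1 - a1))) by (unfold d1,d2; ring).
  rewrite Hc in K1, K2.
  assert (E1 : x1 = a1 + l * d1).
  { unfold l. field_simplify_eq; [|lra]. lra. }
  assert (E2 : x2 = a2 + l * d2).
  { unfold l. field_simplify_eq; [|lra]. lra. }
  exists l. split; [|split; assumption].
  assert (Hq : x1 ^ 2 + x2 ^ 2 = 1 + l * (l - 1) * (d1 * d1 + d2 * d2)).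
  { assert (x1 ^ 2 + x2 ^ 2 - (1 + l * (l - 1) * (d1 * d1 + d2 * d2)) = (a1^2+a2^2 - 1) + l*((b1^2+b2^2) - (a1^2+a2^2))) by (rewrite E1, E2; unfold d1, d2; ring).
    rewrite Ha, Hb in H. lra. }
  assert (l * (l - 1) < 0).
  { assert (l * (l - 1) * (d1 * d1 + d2 * d2) < 0) by lra.
    destruct (Rle_dec 0 (l * (l-1))); [|lra]. nra. }
  split; nra.
Qed.

Lemma cross_affine c d a b l X :
  fst X = fst a + l * (fst b - fst a) -> snd X = snd a + l * (snd b - snd a) ->
  cross c d X = (1 - l) * cross c d a + l * cross c d b.
Proof. intros H1 H2. unfold cross. rewrite H1, H2. ring. Qed.

Lemma collinear3 a b P Q R0 : a <> b -> cross a b P = 0 -> cross a b Q = 0 -> cross a b R0 = 0 ->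
  cross P Q R0 = 0.
Proof.
  intros Hab HP HQ HR.
  assert (I1 : (fst b - fst a) * cross P Q R0 = (fst Q - fst P) * (cross a b R0 - cross a b P) - (fst R0 - fst P) * (cross a b Q - cross a b P)) by (unfold cross; ring).
  assert (I2 : (snd b - snd a) * cross P Q R0 = (snd Q - snd P) * (cross a b R0 - cross a b P) - (snd R0 - snd P) * (cross a b Q - cross a b P)) by (unfold cross; ring).
  rewrite HP, HQ, HR in I1, I2.
  destruct (Req_dec (fst b - fst a) 0).
  - assert (snd b - snd a <> 0). { intro; apply Hab; destruct a, b; simpl in *; f_equal; lra. }
    assert ((snd b - snd a) * cross P Q R0 = 0) by lra.
    apply Rmult_integral in H1; destruct H1; [contradiction|assumption].
  - assert ((fst b - fst a) * cross P Q R0 = 0) by lra.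
    apply Rmult_integral in H0; destruct H0; [contradiction|assumption].
Qed.

Lemma tri_D P Q R0 x : inD P -> inD Q -> inD R0 -> in_triangle P Q R0 x -> inD x.
Proof.
  unfold inD, in_triangle. intros HP HQ HR (a & b & c & Ha & Hb & Hc & Hs & H1 & H2).
  rewrite H1, H2. replace c with (1 - a - b) by lra.
  destruct P as [p1 p2], Q as [q1 q2], R0 as [r1 r2]; cbn [fst snd] in *.
  assert (J : (a * p1 + b * q1 + (1 - a - b) * r1) ^ 2 + (a * p2 + b * q2 + (1 - a - b) * r2) ^ 2
    = a * (p1^2+p2^2) + b * (q1^2+q2^2) + (1-a-b)*(r1^2+r2^2)
      - a*b*((p1-q1)^2+(p2-q2)^2) - a*(1-a-b)*((p1-r1)^2+(p2-r2)^2) - b*(1-a-b)*((q1-r1)^2+(q2-r2)^2))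
    by ring.
  rewrite J.
  assert (Hc' : 0 <= 1 - a - b) by lra.
  assert (0 <= a*b*((p1-q1)^2+(p2-q2)^2)) by (apply Rmult_le_pos; [apply Rmult_le_pos; lra|apply Rplus_le_le_0_compat; apply pow2_ge_0]).
  assert (0 <= a*(1-a-b)*((p1-r1)^2+(p2-r2)^2)) by (apply Rmult_le_pos; [apply Rmult_le_pos; lra|apply Rplus_le_le_0_compat; apply pow2_ge_0]).
  assert (0 <= b*(1-a-b)*((q1-r1)^2+(q2-r2)^2)) by (apply Rmult_le_pos; [apply Rmult_le_pos; lra|apply Rplus_le_le_0_compat; apply pow2_ge_0]).
  assert (a * (p1^2+p2^2) + b * (q1^2+q2^2) + (1-a-b)*(r1^2+r2^2) < 1).
  { assert (a * (p1^2+p2^2) <= a * 1 - a * (1 - (p1^2+p2^2))) by lra.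
    assert (0 <= a * (1 - (p1^2+p2^2))) by (apply Rmult_le_pos; lra).
    assert (0 <= b * (1 - (q1^2+q2^2))) by (apply Rmult_le_pos; lra).
    assert (0 <= (1-a-b) * (1 - (r1^2+r2^2))) by (apply Rmult_le_pos; lra).
    destruct (Req_dec a 0); [destruct (Req_dec b 0)|].
    - assert (0 < (1-a-b) * (1 - (r1^2+r2^2))) by (apply Rmult_lt_0_compat; lra). nra.
    - assert (0 < b * (1 - (q1^2+q2^2))) by (apply Rmult_lt_0_compat; lra). nra.
    - assert (0 < a * (1 - (p1^2+p2^2))) by (apply Rmult_lt_0_compat; lra). nra. }
  lra.
Qed.

Lemma cross_tri a b P Q R0 x : in_triangle P Q R0 x ->
  exists al be ga, 0 <= al /\ 0 <= be /\ 0 <= ga /\ al + be + ga = 1 /\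
   cross a b x = al * cross a b P + be * cross a b Q + ga * cross a b R0.
Proof.
  intros (al & be & ga & H1 & H2 & H3 & H4 & H5 & H6). exists al, be, ga.
  do 4 (split; auto). unfold cross. rewrite H5, H6. replace ga with (1 - al - be) by lra. ring.
Qed.

Lemma tri_P P Q R0 : in_triangle P Q R0 P.
Proof. exists 1, 0, 0. repeat split; try lra; simpl; ring. Qed.
Lemma tri_Q P Q R0 : in_triangle P Q R0 Q.
Proof. exists 0, 1, 0. repeat split; try lra; simpl; ring. Qed.
Lemma tri_R P Q R0 : in_triangle P Q R0 R0.
Proof. exists 0, 0, 1. repeat split; try lra; simpl; ring. Qed.

Lemma vertex_touch a b P Q R0 :
  (forall x, in_triangle P Q R0 x -> 0 <= cross a b x) ->
  (exists x, in_triangle P Q R0 x /\ cross a b x = 0) ->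
  cross a b P = 0 \/ cross a b Q = 0 \/ cross a b R0 = 0.
Proof.
  intros H [x [Hx Hc]].
  pose proof (H _ (tri_P P Q R0)). pose proof (H _ (tri_Q P Q R0)). pose proof (H _ (tri_R P Q R0)).
  destruct (cross_tri a b _ _ _ _ Hx) as (al & be & ga & A1 & A2 & A3 & A4 & A5).
  destruct (Req_dec (cross a b P) 0); auto. destruct (Req_dec (cross a b Q) 0); auto.
  destruct (Req_dec (cross a b R0) 0); auto. exfalso.
  assert (0 < al * cross a b P + be * cross a b Q + ga * cross a b R0).
  { destruct (Req_dec al 0); [destruct (Req_dec be 0)|].
    - assert (0 < ga * cross a b R0) by (apply Rmult_lt_0_compat; lra). nra.
    - assert (0 < be * cross a b Q) by (apply Rmult_lt_0_compat; lra). nra.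
    - assert (0 < al * cross a b P) by (apply Rmult_lt_0_compat; lra). nra. }
  lra.
Qed.


Lemma cosPIx x : cos (PI - x) = - cos x.
Proof. rewrite cos_minus, cos_PI, sin_PI. ring. Qed.

Lemma dot_bound X c sn : sn ^ 2 + c ^ 2 = 1 ->
  (fst X * c + snd X * sn) ^ 2 <= fst X ^ 2 + snd X ^ 2.
Proof.
  intros H.
  assert (fst X ^ 2 + snd X ^ 2 - (fst X * c + snd X * sn) ^ 2 = (fst X * sn - snd X * c) ^ 2 + (fst X ^ 2 + snd X ^2) * (1 - (sn^2 + c^2))) by ring.
  rewrite H in H0. pose proof (pow2_ge_0 (fst X * sn - snd X * c)). lra.
Qed.

Lemma psi_exists P Q R0 s : triangle_in_D P Q R0 ->
  exists w, is_psi (in_triangle P Q R0) s w.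
Proof.
  intros (HP & HQ & HR & Hnd). unfold inD in *.
  set (e := Rmin (1 - (fst P ^ 2 + snd P ^ 2)) (Rmin (1 - (fst Q ^ 2 + snd Q ^ 2)) (1 - (fst R0 ^ 2 + snd R0 ^ 2)))).
  assert (He : 0 < e) by (unfold e; repeat apply Rmin_pos; lra).
  assert (He1 : e <= 1).
  { unfold e. pose proof (Rmin_l (1 - (fst P ^ 2 + snd P ^ 2)) (Rmin (1 - (fst Q ^ 2 + snd Q ^ 2)) (1 - (fst R0 ^ 2 + snd R0 ^ 2)))).
    pose proof (pow2_ge_0 (fst P)). pose proof (pow2_ge_0 (snd P)). lra. }
  assert (HeP : fst P ^ 2 + snd P ^ 2 <= 1 - e) by (unfold e; pose proof (Rmin_l (1 - (fst P ^ 2 + snd P ^ 2)) (Rmin (1 - (fst Q ^ 2 + snd Q ^ 2)) (1 - (fst R0 ^ 2 + snd R0 ^ 2)))); lra).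
  assert (HeQ : fst Q ^ 2 + snd Q ^ 2 <= 1 - e).
  { unfold e. pose proof (Rmin_r (1 - (fst P ^ 2 + snd P ^ 2)) (Rmin (1 - (fst Q ^ 2 + snd Q ^ 2)) (1 - (fst R0 ^ 2 + snd R0 ^ 2)))).
    pose proof (Rmin_l (1 - (fst Q ^ 2 + snd Q ^ 2)) (1 - (fst R0 ^ 2 + snd R0 ^ 2))). lra. }
  assert (HeR : fst R0 ^ 2 + snd R0 ^ 2 <= 1 - e).
  { unfold e. pose proof (Rmin_r (1 - (fst P ^ 2 + snd P ^ 2)) (Rmin (1 - (fst Q ^ 2 + snd Q ^ 2)) (1 - (fst R0 ^ 2 + snd R0 ^ 2)))).
    pose proof (Rmin_r (1 - (fst Q ^ 2 + snd Q ^ 2)) (1 - (fst R0 ^ 2 + snd R0 ^ 2))). lra. }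
  clearbody e.
  set (d := e / 8).
  pose proof PI_RGT_0 as Hpi. pose proof PI_4 as Hpi4.
  assert (Hd : 0 < d <= 1/8) by (unfold d; split; lra).
  assert (Hs1 : 0 < sin (PI * d)) by (apply sinpi_pos; lra).
  assert (Hs2 : sin (PI * d) < e / 2).
  { assert (sin (PI * d) < PI * d) by (apply sin_lt_x; nra). unfold d in *. nra. }
  assert (Hc1 : 0 < cos (PI * d)) by (apply cos_gt_0; nra).
  assert (Hcs : sin (PI * d) ^ 2 + cos (PI * d) ^ 2 = 1).
  { pose proof (sin2_cos2 (PI * d)). unfold Rsqr in H. lra. }
  assert (Hc2 : 1 - e < cos (PI * d) ^ 2) by nra.
  assert (Hdot : forall X phi, fst X ^ 2 + snd X ^ 2 <= 1 - e ->
     - cos (PI * d) < fst X * cos phi + snd X * sin phi < cos (PI * d)).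
  { intros X phi HX. pose proof (dot_bound X (cos phi) (sin phi)).
    assert (sin phi ^ 2 + cos phi ^ 2 = 1) by (pose proof (sin2_cos2 phi); unfold Rsqr in *; lra).
    specialize (H H0). set (z := fst X * cos phi + snd X * sin phi) in *.
    assert (z ^ 2 < cos (PI * d) ^ 2) by lra. split; nra. }
  set (t1 := s + d). set (t2 := s + 1 - d).
  assert (Hpos : forall X, fst X ^ 2 + snd X ^ 2 <= 1 - e -> 0 < cross (cpt s) (cpt t1) X).
  { intros X HX. rewrite cross_formula.
    replace (PI * t1 - PI * s) with (PI * d) by (unfold t1; ring).
    destruct (Hdot X (PI * s + PI * t1) HX). apply Rmult_lt_0_compat; lra. }
  assert (Hneg : forall X, fst X ^ 2 + snd X ^ 2 <= 1 - e -> cross (cpt s) (cpt t2) X < 0).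
  { intros X HX. rewrite cross_formula.
    replace (PI * t2 - PI * s) with (PI - PI * d) by (unfold t2; ring).
    rewrite sin_PI_x, cosPIx.
    destruct (Hdot X (PI * s + PI * t2) HX).
    assert (0 < 2 * sin (PI * d) * - (- cos (PI * d) - (fst X * cos (PI * s + PI * t2) + snd X * sin (PI * s + PI * t2)))) by (apply Rmult_lt_0_compat; lra). lra. }
  set (f := fun t => m2 (m2 (cross (cpt s) (cpt t) P) (cross (cpt s) (cpt t) Q)) (cross (cpt s) (cpt t) R0)).
  assert (Hf1 : 0 < f t1).
  { unfold f. pose proof (Hpos P HeP). pose proof (Hpos Q HeQ). pose proof (Hpos R0 HeR).
    destruct (m2_spec (cross (cpt s) (cpt t1) P) (cross (cpt s) (cpt t1) Q)) as (_ & _ & [E|E]); rewrite E;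
    destruct (m2_spec (cross (cpt s) (cpt t1) P) (cross (cpt s) (cpt t1) R0)) as (_ & _ & [E'|E']);
    destruct (m2_spec (cross (cpt s) (cpt t1) Q) (cross (cpt s) (cpt t1) R0)) as (_ & _ & [E''|E'']); try lra. }
  assert (Hf2 : f t2 < 0).
  { unfold f. pose proof (Hneg R0 HeR).
    destruct (m2_spec (m2 (cross (cpt s) (cpt t2) P) (cross (cpt s) (cpt t2) Q)) (cross (cpt s) (cpt t2) R0)) as (_ & H1 & _). lra. }
  assert (Hfc : forall x, continuous f x).
  { intros x. unfold f. apply cR_m2; [apply cR_m2|]; apply cross_cont. }
  destruct (IVT_gen_consistent f t1 t2 0 Hfc) as [ts [Hts Hf0]].
  { rewrite Rmin_right, Rmax_left; lra. }
  rewrite Rmin_left, Rmax_right in Hts by (unfold t1, t2; lra).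
  unfold f in Hf0.
  destruct (m2_spec (cross (cpt s) (cpt ts) P) (cross (cpt s) (cpt ts) Q)) as (A1 & A2 & A3).
  destruct (m2_spec (m2 (cross (cpt s) (cpt ts) P) (cross (cpt s) (cpt ts) Q)) (cross (cpt s) (cpt ts) R0)) as (B1 & B2 & B3).
  assert (GP : 0 <= cross (cpt s) (cpt ts) P) by lra.
  assert (GQ : 0 <= cross (cpt s) (cpt ts) Q) by lra.
  assert (GR : 0 <= cross (cpt s) (cpt ts) R0) by lra.
  exists (piS ts). unfold is_psi. rewrite cpt_piS.
  split; [apply piS_range|]. split; [|split].
  - intros Heq. unfold cpt in Heq. injection Heq as E1 E2.
    assert (cos (2 * PI * ts - 2 * PI * s) = 1).
    { rewrite cos_minus, E1, E2. pose proof (sin2_cos2 (2 * PI * s)). unfold Rsqr in H. lra. }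
    replace (2 * PI * ts - 2 * PI * s) with (2 * (PI * (ts - s))) in H by ring.
    rewrite cos_2a_sin in H.
    assert (0 < sin (PI * (ts - s))) by (apply sinpi_pos; unfold t1, t2 in Hts; lra). nra.
  - destruct B3 as [B3|B3].
    + destruct A3 as [A3|A3].
      * exists P; split; [apply tri_P|lra].
      * exists Q; split; [apply tri_Q|lra].
    + exists R0; split; [apply tri_R|lra].
  - intros x Hx. destruct (cross_tri (cpt s) (cpt ts) P Q R0 x Hx) as (al & be & ga & C1 & C2 & C3 & C4 & C5).
    rewrite C5. assert (0 <= al * cross (cpt s) (cpt ts) P) by (apply Rmult_le_pos; lra).
    assert (0 <= be * cross (cpt s) (cpt ts) Q) by (apply Rmult_le_pos; lra).
    assert (0 <= ga * cross (cpt s) (cpt ts) R0) by (apply Rmult_le_pos; lra). lra.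
Qed.

Lemma psi_spec P Q R0 v : triangle_in_D P Q R0 ->
  is_psi (in_triangle P Q R0) (piS v) (psi (in_triangle P Q R0) v).
Proof.
  intros H. unfold psi. apply epsilon_spec. apply psi_exists; auto.
Qed.


Lemma SEP2 s t r1 r2 l : s < t < s + 1 -> t <= r1 -> r1 < r2 -> r2 <= s + 1 ->
  (t < r1 \/ r2 < s + 1) -> 0 < l < 1 ->
  0 < (1 - l) * cross (cpt s) (cpt t) (cpt r1) + l * cross (cpt s) (cpt t) (cpt r2).
Proof.
  intros Hst H1 H2 H3 H4 Hl.
  assert (C1 : 0 <= cross (cpt s) (cpt t) (cpt r1)) by (apply arc_nonneg; lra).
  assert (C2 : 0 <= cross (cpt s) (cpt t) (cpt r2)) by (apply arc_nonneg; lra).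
  assert (0 <= (1 - l) * cross (cpt s) (cpt t) (cpt r1)) by (apply Rmult_le_pos; lra).
  assert (0 <= l * cross (cpt s) (cpt t) (cpt r2)) by (apply Rmult_le_pos; lra).
  destruct H4.
  - assert (0 < cross (cpt s) (cpt t) (cpt r1)) by (apply arc_pos; lra).
    assert (0 < (1 - l) * cross (cpt s) (cpt t) (cpt r1)) by (apply Rmult_lt_0_compat; lra). lra.
  - assert (0 < cross (cpt s) (cpt t) (cpt r2)) by (apply arc_pos; lra).
    assert (0 < l * cross (cpt s) (cpt t) (cpt r2)) by (apply Rmult_lt_0_compat; lra). lra.
Qed.

Lemma IVT_any (g : R -> R) a b c : (forall x, continuous g x) ->
  ((g a <= c <= g b) \/ (g b <= c <= g a)) -> exists z, g z = c.
Proof.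
  intros Hg Hc. destruct (IVT_gen_consistent g a b c Hg) as [z [_ Hz]].
  { unfold Rmin, Rmax; destruct (Rle_dec (g a) (g b)); lra. }
  exists z; auto.
Qed.

Section Lift.
Variables (P Q R0 : pt) (F : R -> R).
Hypothesis Htri : triangle_in_D P Q R0.
Hypothesis HF : is_lift (psi (in_triangle P Q R0)) F.
Local Notation U := (in_triangle P Q R0).
Local Notation ps := (psi (in_triangle P Q R0)).

Lemma F_cont x : continuous F x.
Proof. apply HF. Qed.

Lemma F_piS x : piS (F x) = ps (piS x).
Proof. apply HF. Qed.

Lemma F_spec x : is_psi U (piS x) (piS (F x)).
Proof.
  rewrite F_piS. pose proof (psi_spec P Q R0 (piS x) Htri).
  rewrite (piS_id (piS x)) in H by apply piS_range. exact H.
Qed.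

Lemma A_ne x : cpt (F x) <> cpt x.
Proof.
  destruct (F_spec x) as (_ & H & _). rewrite !cpt_piS in H. auto.
Qed.

Lemma A_left x y : U y -> 0 <= cross (cpt x) (cpt (F x)) y.
Proof.
  destruct (F_spec x) as (_ & _ & _ & H). rewrite !cpt_piS in H. auto.
Qed.

Lemma A_touch x : exists y, U y /\ cross (cpt x) (cpt (F x)) y = 0.
Proof.
  destruct (F_spec x) as (_ & _ & H & _). rewrite !cpt_piS in H. auto.
Qed.

Lemma nonint x k : F x - x <> IZR k.
Proof. intros H. apply (A_ne x). apply (cpt_diff _ _ k H). Qed.

Lemma F_disp x : x < F x < x + 1.
Proof.
  destruct HF as (Hc & _ & H0).
  assert (F 0 <> 0) by (intro; apply (nonint 0 0); simpl; lra).
  set (g := fun y => F y - y).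
  assert (Hg : forall y, continuous g y) by (intro; apply cR_minus; [apply Hc|apply cR_id]).
  split.
  - destruct (Rlt_dec x (F x)) as [|Hn]; auto. exfalso.
    destruct (IVT_any g 0 x 0 Hg) as [z Hz].
    { right. unfold g. lra. }
    apply (nonint z 0). exact Hz.
  - destruct (Rlt_dec (F x) (x + 1)) as [|Hn]; auto. exfalso.
    destruct (IVT_any g 0 x 1 Hg) as [z Hz].
    { left. unfold g. lra. }
    apply (nonint z 1). exact Hz.
Qed.

Lemma F_plus1 x : F (x + 1) = F x + 1.
Proof.
  assert (piS (F (x + 1)) = piS (F x)).
  { rewrite !F_piS. f_equal. change 1 with (IZR 1). apply piS_int. }
  destruct (piS_diff _ _ H) as [k Hk].
  pose proof (F_disp x). pose proof (F_disp (x + 1)).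
  assert (0 < IZR k < 2) by lra. destruct H2.
  apply lt_IZR in H2. apply lt_IZR in H3. assert (k = 1%Z) by lia. subst. simpl in Hk. lra.
Qed.

Lemma F_nat x n : F (x + INR n) = F x + INR n.
Proof.
  induction n. - simpl. rewrite !Rplus_0_r. auto.
  - rewrite S_INR. replace (x + (INR n + 1)) with ((x + INR n) + 1) by ring.
    rewrite F_plus1, IHn. ring.
Qed.

Lemma F_int x k : F (x + IZR k) = F x + IZR k.
Proof.
  destruct (Z_le_gt_dec 0 k).
  - rewrite <- (Z2Nat.id k l), <- INR_IZR_INZ. apply F_nat.
  - replace k with (- Z.of_nat (Z.to_nat (- k)))%Z by lia.
    rewrite opp_IZR, <- INR_IZR_INZ. set (n := Z.to_nat (-k)).
    pose proof (F_nat (x + - INR n) n). replace (x + - INR n + INR n) with x in H by ring. lra.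
Qed.

Lemma Fn_int n x k : Nat.iter n F (x + IZR k) = Nat.iter n F x + IZR k.
Proof. induction n; simpl; auto. rewrite IHn. apply F_int. Qed.

Lemma Fn_cont n x : continuous (Nat.iter n F) x.
Proof.
  revert x; induction n; intros x; simpl. apply cR_id.
  apply (continuous_comp (Nat.iter n F) F). apply IHn. apply F_cont.
Qed.

Lemma Fn_piS n x : piS (Nat.iter n F x) = Nat.iter n ps (piS x).
Proof. induction n; simpl; auto. rewrite F_piS, IHn. auto. Qed.

Lemma Fn_bounds n x : x <= Nat.iter n F x <= x + INR n.
Proof.
  induction n. simpl; lra. rewrite S_INR. change (Nat.iter (S n) F x) with (F (Nat.iter n F x)). pose proof (F_disp (Nat.iter n F x)).
  lra.
Qed.

Lemma chord_F x z : U z -> cross (cpt x) (cpt (F x)) z = 0 ->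
  exists l, 0 < l < 1 /\ forall c d, cross c d z = (1 - l) * cross c d (cpt x) + l * cross c d (cpt (F x)).
Proof.
  intros Hz Hc. destruct Htri as (HP & HQ & HR & _).
  destruct (chord_lemma (cpt x) (cpt (F x)) z (cpt_norm x) (cpt_norm (F x))) as (l & Hl & E1 & E2); auto.
  { intro E. apply (A_ne x). auto. }
  { apply (tri_D P Q R0); auto. }
  exists l. split; auto. intros c d. apply cross_affine; auto.
Qed.

Lemma F_mono_loc x y : x < y < x + 1 -> F x < F y.
Proof.
  intros Hxy. destruct (Rlt_dec (F x) (F y)) as [|Hn]; auto. exfalso.
  pose proof (F_disp x). pose proof (F_disp y).
  destruct (A_touch y) as (z & Hz & Hc).
  destruct (chord_F y z Hz Hc) as (l & Hl & E).
  pose proof (A_left x z Hz). rewrite E in H1.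
  assert (C1 : cross (cpt x) (cpt (F x)) (cpt y) < 0) by (apply arc_neg; lra).
  assert (C2 : cross (cpt x) (cpt (F x)) (cpt (F y)) <= 0).
  { destruct (Req_dec (F y) (F x)). rewrite H2, cross_aab; lra. left; apply arc_neg; lra. }
  assert ((1 - l) * cross (cpt x) (cpt (F x)) (cpt y) < 0).
  { assert (0 < (1 - l) * - cross (cpt x) (cpt (F x)) (cpt y)) by (apply Rmult_lt_0_compat; lra). lra. }
  assert (l * cross (cpt x) (cpt (F x)) (cpt (F y)) <= 0).
  { assert (0 <= l * - cross (cpt x) (cpt (F x)) (cpt (F y))) by (apply Rmult_le_pos; lra). lra. }
  lra.
Qed.

Lemma F_mono x y : x <= y < x + 1 -> F x <= F y < F x + 1.
Proof.
  intros H. rewrite <- F_plus1. destruct (Req_dec x y).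
  - subst. rewrite F_plus1. lra.
  - split; [left; apply F_mono_loc; lra| apply F_mono_loc; lra].
Qed.

Lemma Fn_mono n x y : x <= y < x + 1 -> Nat.iter n F x <= Nat.iter n F y < Nat.iter n F x + 1.
Proof. induction n; simpl; intros H. lra. apply F_mono. apply IHn. auto. Qed.

Lemma F2_bound x : F (F x) < x + 1.
Proof.
  destruct (Rlt_dec (F (F x)) (x + 1)) as [|Hn]; auto. exfalso.
  pose proof (F_disp x). pose proof (F_disp (F x)).
  set (x1 := F x) in *. set (x2 := F x1) in *.
  destruct (Req_dec x2 (x + 1)) as [E|E].
  - assert (Cx : cpt x2 = cpt x) by (rewrite E; apply cpt_1).
    assert (Z : forall V, U V -> cross (cpt x) (cpt x1) V = 0).
    { intros V HV. pose proof (A_left x V HV). pose proof (A_left x1 V HV).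
      fold x1 x2 in H1, H2. rewrite Cx, cross_swap in H2. lra. }
    destruct Htri as (_ & _ & _ & Hnd). apply Hnd.
    apply (collinear3 (cpt x) (cpt x1)).
    + intro E'. apply (A_ne x). fold x1. auto.
    + apply Z, tri_P. + apply Z, tri_Q. + apply Z, tri_R.
  - destruct (A_touch x) as (z & Hz & Hc).
    destruct (chord_F x z Hz Hc) as (l & Hl & Ez).
    pose proof (A_left x1 z Hz). rewrite Ez in H1. fold x1 x2 in H1.
    rewrite cross_aba in H1.
    assert (C : cross (cpt x1) (cpt x2) (cpt (x + 1)) < 0) by (apply arc_neg; lra).
    rewrite cpt_1 in C.
    assert (0 < (1 - l) * - cross (cpt x1) (cpt x2) (cpt x)) by (apply Rmult_lt_0_compat; lra).
    lra.
Qed.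

Lemma sepV s s' V r1 r2 : U V -> cross (cpt s') (cpt (F s')) V = 0 ->
  cpt r1 = cpt s' -> cpt r2 = cpt (F s') -> F s <= r1 -> r1 < r2 -> r2 <= s + 1 ->
  (F s < r1 \/ r2 < s + 1) -> cross (cpt s) (cpt (F s)) V <> 0.
Proof.
  intros HV HZ E1 E2 H1 H2 H3 H4.
  destruct (chord_F s' V HV HZ) as (l & Hl & E).
  rewrite E, <- E1, <- E2. pose proof (F_disp s).
  pose proof (SEP2 s (F s) r1 r2 l). lra.
Qed.

Lemma F4_bound x : x + 1 < F (F (F (F x))).
Proof.
  destruct (Rlt_dec (x + 1) (F (F (F (F x))))) as [|Hn]; auto. exfalso.
  set (x0 := x) in *. set (x1 := F x0) in *. set (x2 := F x1) in *. set (x3 := F x2) in *.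
  set (x4 := F x3) in *.
  pose proof (F_disp x0) as D0. pose proof (F_disp x1) as D1. pose proof (F_disp x2) as D2.
  pose proof (F_disp x3) as D3. fold x1 x2 x3 x4 in D0, D1, D2, D3.
  pose proof (F2_bound x0) as B0. pose proof (F2_bound x1) as B1. pose proof (F2_bound x2) as B2.
  fold x1 x2 x3 x4 in B0, B1, B2.
  pose proof (vertex_touch _ _ P Q R0 (A_left x0) (A_touch x0)) as T0.
  pose proof (vertex_touch _ _ P Q R0 (A_left x1) (A_touch x1)) as T1.
  pose proof (vertex_touch _ _ P Q R0 (A_left x2) (A_touch x2)) as T2.
  pose proof (vertex_touch _ _ P Q R0 (A_left x3) (A_touch x3)) as T3.
  fold x1 x2 x3 x4 in T0, T1, T2, T3.
  assert (Hc1 : forall r, cpt (r + 1) = cpt r) by apply cpt_1.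
  assert (S01 : forall V, U V -> cross (cpt x1) (cpt x2) V = 0 -> cross (cpt x0) (cpt x1) V <> 0).
  { intros V HV HZ. apply (sepV x0 x1 V x1 x2); auto; fold x1 x2; lra. }
  assert (S02 : forall V, U V -> cross (cpt x2) (cpt x3) V = 0 -> cross (cpt x0) (cpt x1) V <> 0).
  { intros V HV HZ. apply (sepV x0 x2 V x2 x3); auto; fold x1 x2 x3; lra. }
  assert (S03 : forall V, U V -> cross (cpt x3) (cpt x4) V = 0 -> cross (cpt x0) (cpt x1) V <> 0).
  { intros V HV HZ. apply (sepV x0 x3 V x3 x4); auto; fold x1 x2 x3 x4; lra. }
  assert (S12 : forall V, U V -> cross (cpt x2) (cpt x3) V = 0 -> cross (cpt x1) (cpt x2) V <> 0).
  { intros V HV HZ. apply (sepV x1 x2 V x2 x3); auto; fold x1 x2 x3; lra. }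
  assert (S13 : forall V, U V -> cross (cpt x3) (cpt x4) V = 0 -> cross (cpt x1) (cpt x2) V <> 0).
  { intros V HV HZ. apply (sepV x1 x3 V x3 x4); auto; fold x1 x2 x3 x4; lra. }
  assert (S23 : forall V, U V -> cross (cpt x3) (cpt x4) V = 0 -> cross (cpt x2) (cpt x3) V <> 0).
  { intros V HV HZ. apply (sepV x2 x3 V x3 x4); auto; fold x1 x2 x3 x4; lra. }
  assert (S10 : forall V, U V -> cross (cpt x0) (cpt x1) V = 0 -> cross (cpt x1) (cpt x2) V <> 0).
  { intros V HV HZ. apply (sepV x1 x0 V (x0 + 1) (x1 + 1)); auto; fold x1 x2; lra. }
  assert (S20 : forall V, U V -> cross (cpt x0) (cpt x1) V = 0 -> cross (cpt x2) (cpt x3) V <> 0).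
  { intros V HV HZ. apply (sepV x2 x0 V (x0 + 1) (x1 + 1)); auto; fold x1 x2 x3; lra. }
  assert (S30 : forall V, U V -> cross (cpt x0) (cpt x1) V = 0 -> cross (cpt x3) (cpt x4) V <> 0).
  { intros V HV HZ. apply (sepV x3 x0 V (x0 + 1) (x1 + 1)); auto; fold x1 x2 x3 x4; lra. }
  assert (S21 : forall V, U V -> cross (cpt x1) (cpt x2) V = 0 -> cross (cpt x2) (cpt x3) V <> 0).
  { intros V HV HZ. apply (sepV x2 x1 V (x1 + 1) (x2 + 1)); auto; fold x1 x2 x3; lra. }
  assert (S31 : forall V, U V -> cross (cpt x1) (cpt x2) V = 0 -> cross (cpt x3) (cpt x4) V <> 0).
  { intros V HV HZ. apply (sepV x3 x1 V (x1 + 1) (x2 + 1)); auto; fold x1 x2 x3 x4; lra. }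
  assert (S32 : forall V, U V -> cross (cpt x2) (cpt x3) V = 0 -> cross (cpt x3) (cpt x4) V <> 0).
  { intros V HV HZ. apply (sepV x3 x2 V (x2 + 1) (x3 + 1)); auto; fold x1 x2 x3 x4; lra. }
  pose proof (tri_P P Q R0) as UP. pose proof (tri_Q P Q R0) as UQ. pose proof (tri_R P Q R0) as UR.
  clear -T0 T1 T2 T3 S01 S02 S03 S12 S13 S23 S10 S20 S30 S21 S31 S32 UP UQ UR.
  destruct T0 as [A0|[A0|A0]]; destruct T1 as [A1|[A1|A1]];
  try (eapply S10; [|exact A0|exact A1]; assumption);
  destruct T2 as [A2|[A2|A2]];
  try (eapply S20; [|exact A0|exact A2]; assumption);
  try (eapply S21; [|exact A1|exact A2]; assumption);
  destruct T3 as [A3|[A3|A3]];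
  try (eapply S30; [|exact A0|exact A3]; assumption);
  try (eapply S31; [|exact A1|exact A3]; assumption);
  try (eapply S32; [|exact A2|exact A3]; assumption).
Qed.

End Lift.


Lemma inv_n_lim : is_lim_seq (fun n => / INR n) 0.
Proof.
  pose proof (is_lim_seq_inv INR p_infty is_lim_seq_INR). simpl in H. apply H. discriminate.
Qed.

Lemma lim_cKn c K : Lim_seq (fun n => c - K * / INR n) = c.
Proof.
  apply is_lim_seq_unique.
  pose proof (is_lim_seq_minus' _ _ c (K * 0) (is_lim_seq_const c)
     (is_lim_seq_mult' _ _ K 0 (is_lim_seq_const K) inv_n_lim)).
  replace (c - K * 0) with c in H by ring. exact H.
Qed.

Lemma lim_lower (u : nat -> R) c K : (forall n, (1 <= n)%nat -> c - K / INR n <= u n) ->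
  Rbar_le c (Lim_seq u).
Proof.
  intros H. rewrite <- (lim_cKn c K). apply Lim_seq_le_loc. exists 1%nat. intros n Hn.
  apply H; auto.
Qed.

Lemma lim_upper (u : nat -> R) c K : (forall n, (1 <= n)%nat -> u n <= c + K / INR n) ->
  Rbar_le (Lim_seq u) c.
Proof.
  intros H. rewrite <- (lim_cKn c (- K)). apply Lim_seq_le_loc. exists 1%nat. intros n Hn.
  unfold Rdiv in H. specialize (H n Hn). lra.
Qed.

Lemma INR_pos n : (1 <= n)%nat -> 0 < INR n.
Proof. intros. apply lt_0_INR. lia. Qed.

Lemma divmod5 n : INR n = 5 * INR (n / 5) + INR (n mod 5) /\ (n mod 5 < 5)%nat.
Proof.
  split. - rewrite (Nat.div_mod_eq n 5) at 1. rewrite plus_INR, mult_INR. simpl. ring.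
  - apply Nat.mod_upper_bound. lia.
Qed.

Section Main.
Variables (P Q R0 : pt) (F : R -> R).
Hypothesis Htri : triangle_in_D P Q R0.
Hypothesis HF : is_lift (psi (in_triangle P Q R0)) F.
Local Notation ps := (psi (in_triangle P Q R0)).

Definition C1 := exists al : R, 0 <= al < 1 /\ Nat.iter 5 ps al = al.
Definition C2 := rot_number F = Finite (2 / 5).
Definition C3 := exists a : nat -> R,
      0 <= a 0%nat /\ a 4%nat < 1 /\
      (forall i : nat, (i < 4)%nat -> a i < a (S i)) /\
      (forall i : nat, (i < 5)%nat -> ps (piS (a i)) = piS (a ((i + 2) mod 5)%nat)).
Definition C4 := exists al : R, 0 <= al < 1 /\
      forall x : R, piS x = al -> Nat.iter 5 F x = x + 2.

Let disp := F_disp P Q R0 F Htri HF.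
Let F2b := F2_bound P Q R0 F Htri HF.
Let F4b := F4_bound P Q R0 F Htri HF.

Lemma F5_bounds x : x + 1 < Nat.iter 5 F x < x + 3.
Proof.
  simpl. pose proof (F4b (F x)). pose proof (disp x).
  pose proof (F2b (F (F (F x)))). pose proof (F2b (F x)). lra.
Qed.

Lemma C4_of_fix x0 : Nat.iter 5 F x0 = x0 + 2 -> C4.
Proof.
  intros H. exists (piS x0). split; [apply piS_range|]. intros x Hx.
  destruct (piS_diff x x0 Hx) as [k Hk]. replace x with (x0 + IZR k) by lra.
  rewrite (Fn_int P Q R0 F Htri HF). rewrite H. ring.
Qed.

Lemma C1_C4 : C1 -> C4.
Proof.
  intros (al & Hal & H).
  assert (piS (Nat.iter 5 F al) = piS al).
  { rewrite (Fn_piS P Q R0 F HF). rewrite (piS_id al Hal). auto. }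
  destruct (piS_diff _ _ H0) as [k Hk]. pose proof (F5_bounds al).
  assert (1 < IZR k < 3) by lra. destruct H2. apply lt_IZR in H2, H3.
  assert (k = 2%Z) by lia. subst. apply (C4_of_fix al). lra.
Qed.

Lemma C4_C1 : C4 -> C1.
Proof.
  intros (al & Hal & H). exists al. split; auto.
  rewrite <- (piS_id al Hal) at 1. rewrite <- (Fn_piS P Q R0 F HF).
  rewrite H by (apply piS_id; auto). change 2 with (IZR 2). rewrite piS_int. apply piS_id; auto.
Qed.

Lemma C3_C1 : C3 -> C1.
Proof.
  intros (a & H0 & H4 & Hs & Hp).
  pose proof (Hs 0%nat ltac:(lia)). pose proof (Hs 1%nat ltac:(lia)).
  pose proof (Hs 2%nat ltac:(lia)). pose proof (Hs 3%nat ltac:(lia)). simpl in *.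
  assert (E : forall i, (i < 5)%nat -> ps (a i) = a ((i + 2) mod 5)%nat).
  { intros i Hi. pose proof (Hp i Hi).
    assert (0 <= a i < 1 /\ 0 <= a ((i + 2) mod 5)%nat < 1).
    { assert (forall j, (j < 5)%nat -> 0 <= a j < 1).
      { intros j Hj. destruct j as [|[|[|[|[|j]]]]]; try lia; lra. }
      split; apply H6; auto. apply Nat.mod_upper_bound; lia. }
    rewrite !piS_id in H5 by tauto. auto. }
  exists (a 0%nat). split; [lra|]. simpl.
  rewrite (E 0%nat) by lia; simpl; rewrite (E 2%nat) by lia; simpl; rewrite (E 4%nat) by lia; simpl;
  rewrite (E 1%nat) by lia; simpl; rewrite (E 3%nat) by lia; simpl; auto.
Qed.

Definition Prel (z : nat -> R) := forall i : nat, (i < 5)%nat -> ps (piS (z i)) = piS (z ((i + 2) mod 5)%nat).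

Lemma rot_seq n : forall z : nat -> R, 0 <= z 0%nat -> z 0%nat < 1 ->
  (forall i, (i < 4)%nat -> z i < z (S i)) -> z 4%nat < z 0%nat + 1 -> Prel z ->
  (forall i, (i < 5 - n)%nat -> z i < 1) -> C3.
Proof.
  induction n; intros z Z0 Z1 Zs Z4 Zp Zl.
  - unfold C3. exists z. split; [auto|split; [apply Zl; lia| split; auto]].
  - destruct (Rlt_dec (z 4%nat) 1).
    + unfold C3. exists z. split; [auto|split; [auto| split; auto]].
    + set (z' := fun i => match i with 0%nat => z 4%nat - 1 | S j => z j end).
      pose proof (Zs 0%nat ltac:(lia)). pose proof (Zs 1%nat ltac:(lia)).
      pose proof (Zs 2%nat ltac:(lia)). pose proof (Zs 3%nat ltac:(lia)).
      apply (IHn z'); unfold z'; try lra.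
      * intros i Hi. destruct i as [|[|[|[|i]]]]; [lra|lra|lra|lra|exfalso; lia].
      * intros i Hi. pose proof (Zp 0%nat ltac:(lia)). pose proof (Zp 1%nat ltac:(lia)).
        pose proof (Zp 2%nat ltac:(lia)). pose proof (Zp 3%nat ltac:(lia)).
        pose proof (Zp 4%nat ltac:(lia)). simpl in H3, H4, H5, H6, H7.
        assert (Hm : piS (z 4%nat - 1) = piS (z 4%nat)).
        { replace (z 4%nat - 1) with (z 4%nat + IZR (-1)) by (simpl; ring). apply piS_int. }
        destruct i as [|[|[|[|[|i]]]]]; simpl; try lia; try rewrite Hm; auto.
      * intros i Hi. destruct i. lra. apply Zl. lia.
Qed.

Lemma C4_C3 : C4 -> C3.
Proof.
  intros (al & Hal & H).
  set (x0 := al). set (x1 := F x0). set (x2 := F x1). set (x3 := F x2). set (x4 := F x3).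
  assert (H5 : F x4 = x0 + 2). { apply H. apply piS_id; auto. }
  assert (H6 : F (F x4) = x1 + 2). { rewrite H5. change 2 with (IZR 2). apply (F_int P Q R0 F Htri HF). }
  pose proof (F2b x0). pose proof (F2b x1). pose proof (F2b x2). pose proof (F2b x3). pose proof (F2b x4).
  fold x1 x2 x3 x4 in H0, H1, H2, H3, H4. rewrite H5 in H3. rewrite H6 in H4.
  set (z := fun i => match i with 0%nat => x0 | 1%nat => x3 - 1 | 2%nat => x1 | 3%nat => x4 - 1 | _ => x2 end).
  assert (Hm : forall y, piS (y - 1) = piS y).
  { intros y. replace (y - 1) with (y + IZR (-1)) by (simpl; ring). apply piS_int. }
  assert (Fp : forall y, ps (piS y) = piS (F y)). { intros; symmetry; apply (F_piS P Q R0 F HF). }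
  apply (rot_seq 5 z); unfold z; simpl; try (unfold x0; lra).
  - intros i Hi. destruct i as [|[|[|[|i]]]]; simpl; try lra; lia.
  - lra.
  - intros i Hi. destruct i as [|[|[|[|[|i]]]]]; simpl; try lia; rewrite ?Hm, Fp; fold x1 x2 x3 x4; auto.
    + rewrite H5. change 2 with (IZR 2). rewrite piS_int. auto.
  - intros i Hi. lia.
Qed.

Lemma iter5m_al al m : (forall x, piS x = al -> Nat.iter 5 F x = x + 2) -> 0 <= al < 1 ->
  Nat.iter (5 * m) F al = al + 2 * INR m.
Proof.
  intros H Hal. induction m.
  - simpl. ring.
  - replace (5 * S m)%nat with (5 + 5 * m)%nat by lia. rewrite Nat.iter_add, IHm.
    replace (al + 2 * INR m) with (al + IZR (Z.of_nat (2 * m))) by (rewrite <- INR_IZR_INZ, mult_INR; simpl; ring).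
    rewrite (Fn_int P Q R0 F Htri HF). rewrite H by (apply piS_id; auto).
    rewrite <- INR_IZR_INZ, S_INR, mult_INR. simpl. ring.
Qed.

Lemma C4_C2 : C4 -> C2.
Proof.
  intros (al & Hal & H). unfold C2, rot_number.
  assert (B : forall n, Rabs (Nat.iter n F 0 - 2 / 5 * INR n) <= 5).
  { intros n. destruct (divmod5 n) as [En Hr]. set (m := (n / 5)%nat) in *. set (r := (n mod 5)%nat) in *.
    assert (Ei : Nat.iter n F al = Nat.iter r F al + 2 * INR m).
    { rewrite (Nat.div_mod_eq n 5). fold m r. rewrite Nat.add_comm, Nat.iter_add.
      rewrite (iter5m_al al m H Hal).
      replace (al + 2 * INR m) with (al + IZR (Z.of_nat (2 * m))) by (rewrite <- INR_IZR_INZ, mult_INR; simpl; ring).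
      rewrite (Fn_int P Q R0 F Htri HF). rewrite <- INR_IZR_INZ, mult_INR. simpl. ring. }
    pose proof (Fn_bounds P Q R0 F Htri HF r al).
    pose proof (Fn_mono P Q R0 F Htri HF n 0 al ltac:(lra)).
    assert (INR r <= 4). { replace 4 with (INR 4) by (simpl; ring). apply le_INR. lia. }
    pose proof (pos_INR r).
    apply Rabs_le. lra. }
  apply Rbar_le_antisym.
  - apply (lim_upper _ _ 5). intros n Hn. pose proof (INR_pos n Hn). specialize (B n).
    apply Rabs_le_between in B. apply (Rmult_le_reg_r (INR n)); auto.
    unfold Rdiv. field_simplify; lra.
  - apply (lim_lower _ _ 5). intros n Hn. pose proof (INR_pos n Hn). specialize (B n).
    apply Rabs_le_between in B. apply (Rmult_le_reg_r (INR n)); auto.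
    unfold Rdiv. field_simplify; lra.
Qed.

Lemma iter5m_ge eps m y : (forall x, x + 2 + eps <= Nat.iter 5 F x) ->
  y + INR m * (2 + eps) <= Nat.iter (5 * m) F y.
Proof.
  intros H. induction m.
  - simpl. lra.
  - replace (5 * S m)%nat with (5 + 5 * m)%nat by lia. rewrite Nat.iter_add.
    pose proof (H (Nat.iter (5 * m) F y)). rewrite S_INR. lra.
Qed.

Lemma iter5m_le eps m y : (forall x, Nat.iter 5 F x <= x + 2 - eps) ->
  Nat.iter (5 * m) F y <= y + INR m * (2 - eps).
Proof.
  intros H. induction m.
  - simpl. lra.
  - replace (5 * S m)%nat with (5 + 5 * m)%nat by lia. rewrite Nat.iter_add.
    pose proof (H (Nat.iter (5 * m) F y)). rewrite S_INR. lra.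
Qed.

Lemma C2_C4 : C2 -> C4.
Proof.
  intros HC. unfold C2, rot_number in HC.
  destruct (classic (exists x0, Nat.iter 5 F x0 = x0 + 2)) as [[x0 Hx0]|Hno].
  { apply (C4_of_fix x0 Hx0). }
  exfalso.
  set (G := fun x => Nat.iter 5 F x - x - 2).
  assert (Gc : forall x, continuous G x).
  { intros x. unfold G. apply cR_minus; [apply cR_minus|apply cR_const]; [apply (Fn_cont P Q R0 F HF)|apply cR_id]. }
  assert (Gz : forall x, G x <> 0). { intros x Hx. apply Hno. exists x. unfold G in Hx. lra. }
  assert (Gp : forall x k, G (x + IZR k) = G x).
  { intros. unfold G. rewrite (Fn_int P Q R0 F Htri HF). ring. }
  assert (Gper : forall x, G x = G (piS x)).
  { intros x. destruct (x_minus_piS x) as [k Hk]. replace x with (piS x + IZR k) at 1 by lra. apply Gp. }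
  assert (Gcp : forall c, continuity_pt G c) by (intro; apply continuity_pt_filterlim, Gc).
  assert (Hsame : forall x, (0 < G 0 -> 0 < G x) /\ (G 0 < 0 -> G x < 0)).
  { intros x. split; intros H0; destruct (Rlt_dec 0 (G x)); auto;
    destruct (Rlt_dec (G x) 0); auto; exfalso;
    try (destruct (IVT_any G 0 x 0 Gc) as [z Hz]; [lra|apply (Gz z Hz)]);
    apply (Gz x); lra. }
  pose proof (Gz 0). pose proof (INR_pos).
  assert (Hn0 : forall n, (1 <= n)%nat -> 0 <= Nat.iter (n mod 5) F 0 <= 4).
  { intros n _. pose proof (Fn_bounds P Q R0 F Htri HF (n mod 5) 0).
    assert (INR (n mod 5) <= 4). { replace 4 with (INR 4) by (simpl; ring). apply le_INR.
      pose proof (Nat.mod_upper_bound n 5). lia. } lra. }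
  destruct (Rlt_dec 0 (G 0)) as [Hpos|Hneg].
  - destruct (continuity_ab_min G 0 1 ltac:(lra) (fun c _ => Gcp c)) as [mx [Hmx Hmx01]].
    set (eps := G mx). assert (He : 0 < eps) by (apply Hsame; auto).
    assert (HG : forall x, x + 2 + eps <= Nat.iter 5 F x).
    { intros x. pose proof (Hmx (piS x) ltac:(pose proof (piS_range x); lra)).
      rewrite <- Gper in H1. fold eps in H1. unfold G in H1. lra. }
    assert (Rbar_le (2 / 5 + eps / 5) (Lim_seq (fun n => (Nat.iter n F 0 - 0) / INR n))).
    { apply (lim_lower _ _ (4 * (2 + eps) / 5)). intros n Hn. pose proof (INR_pos n Hn).
      destruct (divmod5 n) as [En Hr].
      pose proof (iter5m_ge eps (n / 5) (Nat.iter (n mod 5) F 0) HG) as Hit.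
      rewrite <- Nat.iter_add, <- Nat.div_mod_eq in Hit.
      pose proof (Hn0 n Hn).
      assert (INR (n mod 5) <= 4). { replace 4 with (INR 4) by (simpl; ring). apply le_INR. lia. }
      apply (Rmult_le_reg_r (INR n)); auto. unfold Rdiv. field_simplify; try lra. nra. }
    rewrite HC in H1. simpl in H1. lra.
  - assert (G 0 < 0) by lra.
    destruct (continuity_ab_maj G 0 1 ltac:(lra) (fun c _ => Gcp c)) as [mx [Hmx Hmx01]].
    set (eps := - G mx). assert (He : 0 < eps) by (unfold eps; pose proof (proj2 (Hsame mx) H1); lra).
    assert (HG : forall x, Nat.iter 5 F x <= x + 2 - eps).
    { intros x. pose proof (Hmx (piS x) ltac:(pose proof (piS_range x); lra)).
      rewrite <- Gper in H2. assert (G mx = - eps) by (unfold eps; ring). rewrite H3 in H2. unfold G in H2. lra. }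
    assert (eps < 1). { pose proof (F5_bounds 0). pose proof (HG 0). lra. }
    assert (Rbar_le (Lim_seq (fun n => (Nat.iter n F 0 - 0) / INR n)) (2 / 5 - eps / 5)).
    { apply (lim_upper _ _ 4). intros n Hn. pose proof (INR_pos n Hn).
      destruct (divmod5 n) as [En Hr].
      pose proof (iter5m_le eps (n / 5) (Nat.iter (n mod 5) F 0) HG) as Hit.
      rewrite <- Nat.iter_add, <- Nat.div_mod_eq in Hit.
      pose proof (Hn0 n Hn). pose proof (pos_INR (n/5)). pose proof (pos_INR (n mod 5)).
      assert (0 <= (2 - eps) * INR (n mod 5)) by (apply Rmult_le_pos; lra).
      apply (Rmult_le_reg_r (INR n)); auto. unfold Rdiv. field_simplify; try lra. rewrite En. nra. }
    rewrite HC in H3. simpl in H3. lra.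
Qed.

End Main.


Theorem lemma4p1 (P Q R0 : pt) (F : R -> R) :
  triangle_in_D P Q R0 ->
  is_lift (psi (in_triangle P Q R0)) F ->
  let ps := psi (in_triangle P Q R0) in
  ((exists al : R, 0 <= al < 1 /\ Nat.iter 5 ps al = al) <->
   rot_number F = Finite (2 / 5)) /\
  (rot_number F = Finite (2 / 5) <->
   (exists a : nat -> R,
      0 <= a 0%nat /\ a 4%nat < 1 /\
      (forall i : nat, (i < 4)%nat -> a i < a (S i)) /\
      (forall i : nat, (i < 5)%nat -> ps (piS (a i)) = piS (a ((i + 2) mod 5)%nat)))) /\
  ((exists a : nat -> R,
      0 <= a 0%nat /\ a 4%nat < 1 /\
      (forall i : nat, (i < 4)%nat -> a i < a (S i)) /\
      (forall i : nat, (i < 5)%nat -> ps (piS (a i)) = piS (a ((i + 2) mod 5)%nat))) <->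
   (exists al : R, 0 <= al < 1 /\
      forall x : R, piS x = al -> Nat.iter 5 F x = x + 2)).
Proof.
  intros Htri HF ps.
  pose proof (C1_C4 P Q R0 F Htri HF) as H14.
  pose proof (C4_C1 P Q R0 F HF) as H41.
  pose proof (C2_C4 P Q R0 F Htri HF) as H24.
  pose proof (C4_C2 P Q R0 F Htri HF) as H42.
  pose proof (C3_C1 P Q R0) as H31.
  pose proof (C4_C3 P Q R0 F Htri HF) as H43.
  unfold C1, C2, C3, C4 in *. unfold ps.
  split; [|split]; split; intro H; auto.
Qed.
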